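(* Let $\ell$, $x\le y$, $n=y-x$, $\lambda\in\mathbb{R}$ be such that $\inf_{t\in[0,1],\,x\le z\le y-1}\Xi_\ell(t,z)\ge\lambda$, and let $1\le i\le n$. Then the functions $$s\mapsto\frac{\int_{\Delta^{0,s}_{1,i-1}}\exp\big(\xi_{1,i-1}(\mathbf t_{1,i-1})\big)\,d\mathbf t_{1,i-1}}{\int_{\Delta^{0,s}_{1,i-1}}\exp\big(\lambda\sum_{j=1}^{i-1}t_j\big)\,d\mathbf t_{1,i-1}} \quad\text{and}\quad s\mapsto\frac{\int_{\Delta^{s,1}_{i+1,n}}\exp\big(\xi_{i+1,n}(\mathbf t_{i+1,n})\big)\,d\mathbf t_{i+1,n}}{\int_{\Delta^{s,1}_{i+1,n}}\exp\big(\lambda\sum_{j=i+1}^{n}t_j\big)\,d\mathbf t_{i+1,n}}$$ are non-decreasing in $s$ (on $(0,1)$, for those $i$ for which the respective integrals are over a nonempty set of variables).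
   Context: $\ell:[0,1]\times\mathbb{N}\to(0,\infty)$ is the jump intensity of a Markov counting process, with $t\mapsto\ell(t,z)$ continuously differentiable on $[0,1]$ for each $z$. The reciprocal characteristic is $\Xi_\ell(t,z)=\partial_t\log\ell(t,z)+\ell(t,z+1)-\ell(t,z)$. For $1\le j\le n$, $\xi_j:[0,1]\to\mathbb{R}$ is the primitive of $t\mapsto\Xi_\ell(t,x+j-1)$ with $\xi_j(0)=0$, and for $i\le k$, $\xi_{i,k}(\mathbf t_{i,k})=\sum_{j=i}^k\xi_j(t_j)$, where $\mathbf t_{i,k}=(t_i,\dots,t_k)$. For $0\le s\le r\le1$, $\Delta^{s,r}_{i,k}=\{(t_i,\dots,t_k):s<t_i<t_{i+1}<\dots<t_k<r\}$. *)

(* Defs.v *)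
From Stdlib Require Import Reals List.
From Coquelicot Require Import Coquelicot.
Import ListNotations.
Open Scope R_scope.

Definition Xi (l : R -> nat -> R) (t : R) (z : nat) : R :=
  Derive (fun u => ln (l u z)) t + l t (S z) - l t z.

Definition xi (l : R -> nat -> R) (x : nat) (j : nat) (t : R) : R :=
  RInt (fun u => Xi l u (x + j - 1)%nat) 0 t.

(* xi_{j0, j0+k-1}(t_{j0},...,t_{j0+k-1}) = sum_j xi_j(t_j),
   the list [t_{j0}; ...; t_{j0+k-1}] holding the variables in order. *)
Fixpoint xi_sum (l : R -> nat -> R) (x : nat) (j0 : nat) (ts : list R) : R :=
  match ts with
  | [] => 0
  | t :: ts' => xi l x j0 t + xi_sum l x (S j0) ts'
  end.

(* Integral of F over the open simplex {s < t_1 < ... < t_k < r} (k variables),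
   written as the iterated integral
     int_s^r dt_1 int_{t_1}^r dt_2 ... int_{t_{k-1}}^r dt_k F(t_1,...,t_k). *)
Fixpoint simplex_int (k : nat) (F : list R -> R) (s r : R) : R :=
  match k with
  | O => F []
  | S k' => RInt (fun t => simplex_int k' (fun ts => F (t :: ts)) t r) s r
  end.

(* Main.v *)
Require Import Defs.
From Stdlib Require Import Reals List Lra Lia.
From Coquelicot Require Import Coquelicot.
Open Scope R_scope.

Lemma cR_mult (f g : R -> R) (x : R) : continuous f x -> continuous g x -> continuous (fun y => f y * g y) x.
Proof. intros; exact (continuous_mult f g x H H0). Qed.

Lemma cR_cont_RInt_low (g : R -> R) r t0 : (forall u, continuous g u) ->
  continuous (fun t => RInt g t r) t0.
Proof.
  intros Hg. apply (ex_derive_continuous (fun t => RInt g t r)).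
  exists (opp (g t0)). apply (is_derive_RInt' g (fun t => RInt g t r) t0 r).
  - apply filter_forall. intros a. apply (RInt_correct (V:=R_CompleteNormedModule)). apply (ex_RInt_continuous (V:=R_CompleteNormedModule)). intros; apply Hg.
  - apply Hg.
Qed.

Lemma cR_cont_RInt_up (g : R -> R) a t0 : (forall u, continuous g u) ->
  continuous (fun t => RInt g a t) t0.
Proof.
  intros Hg. apply (ex_derive_continuous (fun t => RInt g a t)).
  exists (g t0). apply (is_derive_RInt g (fun t => RInt g a t) a t0).
  - apply filter_forall. intros b. apply (RInt_correct (V:=R_CompleteNormedModule)). apply (ex_RInt_continuous (V:=R_CompleteNormedModule)). intros; apply Hg.
  - apply Hg.
Qed.

Fixpoint Pr (H : nat -> R -> R) (j k : nat) (s r : R) : R :=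
  match k with
  | O => 1
  | S k' => RInt (fun t => H j t * Pr H (S j) k' t r) s r
  end.

Definition GC (H : nat -> R -> R) := forall j t, continuous (H j) t.

Lemma Pr_cont H : GC H -> forall k j r t0, continuous (fun t => Pr H j k t r) t0.
Proof.
  intros HC k. induction k as [|k IH]; intros j r t0; simpl.
  - apply continuous_const.
  - apply cR_cont_RInt_low. intros u. apply cR_mult; [apply HC| apply IH].
Qed.

Lemma Pr_integrand_ex H : GC H -> forall k j r a b,
  ex_RInt (fun t => H j t * Pr H (S j) k t r) a b.
Proof.
  intros HC k j r a b. apply (ex_RInt_continuous (V:=R_CompleteNormedModule)). intros z _.
  apply cR_mult; [apply HC | apply Pr_cont; auto].
Qed.

Lemma Pr_loc H G a b : (forall j t, a <= t <= b -> H j t = G j t) ->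
  forall k j s r, a <= s <= b -> a <= r <= b -> Pr H j k s r = Pr G j k s r.
Proof.
  intros HE k. induction k as [|k IH]; intros j s r Hs Hr; simpl; auto.
  apply RInt_ext. intros t Ht.
  assert (a <= t <= b).
  { destruct Ht as [H1 H2]. split.
    - apply Rle_trans with (Rmin s r); [apply Rmin_glb; lra | lra].
    - apply Rle_trans with (Rmax s r); [lra | apply Rmax_lub; lra]. }
  rewrite HE by auto. rewrite IH by auto. reflexivity.
Qed.

Lemma Pr_nonneg H a b : GC H -> (forall j t, a <= t <= b -> 0 <= H j t) ->
  forall k j s r, a <= s -> s <= r -> r <= b -> 0 <= Pr H j k s r.
Proof.
  intros HC Hp k. induction k as [|k IH]; intros j s r H1 H2 H3; simpl; [lra|].
  apply RInt_ge_0; auto. apply Pr_integrand_ex; auto.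
  intros t Ht. apply Rmult_le_pos; [apply Hp; lra | apply IH; lra].
Qed.

Lemma Pr_pos H a b : GC H -> (forall j t, a <= t <= b -> 0 < H j t) ->
  forall k j s r, a <= s -> s < r -> r <= b -> 0 < Pr H j k s r.
Proof.
  intros HC Hp k. induction k as [|k IH]; intros j s r H1 H2 H3; simpl; [lra|].
  apply RInt_gt_0; auto.
  - intros t Ht. apply Rmult_lt_0_compat; [apply Hp; lra | apply IH; lra].
  - intros z _. apply cR_mult; [apply HC | apply Pr_cont; auto].
Qed.

Lemma Pr_mono H G a b : GC H -> GC G ->
  (forall j t, a <= t <= b -> 0 <= H j t <= G j t) ->
  forall k j s r, a <= s -> s <= r -> r <= b -> Pr H j k s r <= Pr G j k s r.
Proof.
  intros HC GCc Hp k. induction k as [|k IH]; intros j s r H1 H2 H3; simpl; [lra|].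
  apply RInt_le; auto; try apply Pr_integrand_ex; auto.
  intros t Ht. destruct (Hp j t) as [A B]; [lra|].
  apply Rmult_le_compat; auto.
  - apply (Pr_nonneg H a b); auto. intros; apply Hp; auto. lra. lra.
  - apply IH; lra.
Qed.

Lemma Pr_scale H c : GC H -> forall k j s r,
  Pr (fun j t => c * H j t) j k s r = c ^ k * Pr H j k s r.
Proof.
  intros HC k. induction k as [|k IH]; intros j s r; simpl; [lra|].
  rewrite (RInt_ext _ (fun t => scal (c * c ^ k) (H j t * Pr H (S j) k t r))).
  - rewrite (RInt_scal (V:=R_CompleteNormedModule)); [reflexivity | apply Pr_integrand_ex; auto].
  - intros t _. rewrite IH. unfold scal; simpl; unfold mult; simpl. ring.
Qed.

Lemma Pr_subst H (Sf dS : R -> R) : GC H -> forall k j a b, a <= b ->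
  (forall x, a <= x <= b -> is_derive Sf x (dS x) /\ continuous dS x) ->
  Pr H j k (Sf a) (Sf b) = Pr (fun j w => dS w * H j (Sf w)) j k a b.
Proof.
  intros HC k. induction k as [|k IH]; intros j a b Hab HS; simpl; auto.
  rewrite <- (RInt_comp (fun t => H j t * Pr H (S j) k t (Sf b)) Sf dS).
  - apply RInt_ext. intros w Hw. rewrite Rmin_left in Hw by lra. rewrite Rmax_right in Hw by lra.
    rewrite IH by (try lra; intros; apply HS; lra).
    unfold scal; simpl; unfold mult; simpl. ring.
  - intros x _. apply cR_mult; [apply HC | apply Pr_cont; auto].
  - intros x Hx. rewrite Rmin_left in Hx by lra. rewrite Rmax_right in Hx by lra. apply HS; auto.
Qed.

Definition clamp (a b t : R) := Rmax a (Rmin b t).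

Lemma clamp_lip a b u v : Rabs (clamp a b u - clamp a b v) <= Rabs (u - v).
Proof. unfold clamp, Rmax, Rmin; repeat destruct Rle_dec; split_Rabs; lra. Qed.

Lemma clamp_in a b t : a <= b -> a <= clamp a b t <= b.
Proof. unfold clamp, Rmax, Rmin; repeat destruct Rle_dec; lra. Qed.

Lemma clamp_id a b t : a <= t <= b -> clamp a b t = t.
Proof. unfold clamp, Rmax, Rmin; repeat destruct Rle_dec; lra. Qed.

Lemma clamp_cont a b t : continuous (clamp a b) t.
Proof.
  apply continuity_pt_filterlim. intros eps Heps. exists eps. split; auto.
  intros x [_ Hx]. simpl in *. unfold R_dist in *.
  eapply Rle_lt_trans; [apply clamp_lip | auto].
Qed.

Lemma cont_clamp_comp (f : R -> R) a b : a <= b ->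
  (forall t, a <= t <= b -> continuous f t) -> forall t, continuous (fun t => f (clamp a b t)) t.
Proof.
  intros Hab Hf t. apply (continuous_comp (clamp a b) f). apply clamp_cont. apply Hf, clamp_in; auto.
Qed.

Lemma core H E a b alpha Sf dS : GC H -> GC E ->
 (forall j t, 0 <= t <= 1 -> 0 < H j t) -> (forall j t, 0 <= t <= 1 -> 0 < E j t) ->
 (forall j t u, 0 <= t -> t <= u -> u <= 1 -> H j t * E j u <= H j u * E j t) ->
 0 <= a -> a <= b -> b <= 1 -> 0 < alpha ->
 (forall x, a <= x <= b -> is_derive Sf x (dS x) /\ continuous dS x) ->
 (forall x, a <= x <= b -> x <= Sf x <= 1) ->
 (forall j x, a <= x <= b -> E j (Sf x) * dS x = alpha * E j x) ->
 forall k j, alpha ^ k * Pr H j k a b <= Pr H j k (Sf a) (Sf b)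
   /\ Pr E j k (Sf a) (Sf b) = alpha ^ k * Pr E j k a b.
Proof.
  intros HC EC Hp Ep Hx Ha Hab Hb Hal HS HSr HE k j.
  assert (Hcont : forall (G : nat -> R -> R), GC G -> forall j0 w, a <= w <= b ->
     continuous (fun w => dS w * G j0 (Sf w)) w).
  { intros G GG j0 w Hw. apply cR_mult. apply HS; auto.
    apply (continuous_comp Sf (G j0)). apply (ex_derive_continuous Sf).
    exists (dS w). apply HS; auto. apply GG. }
  split.
  - rewrite (Pr_subst H Sf dS) by auto.
    rewrite (Pr_loc (fun j w => dS w * H j (Sf w)) (fun j w => dS (clamp a b w) * H j (Sf (clamp a b w))) a b);
      [| intros; rewrite clamp_id; auto | lra | lra].
    rewrite <- Pr_scale by auto.
    apply (Pr_mono _ _ a b); try lra.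
    + intros j0 t. apply (continuous_mult (fun _ => alpha) (H j0)). apply continuous_const. apply HC.
    + intros j0. apply (cont_clamp_comp (fun w => dS w * H j0 (Sf w))); auto.
    + intros j0 t Ht. rewrite clamp_id by auto.
      assert (HSt := HSr t Ht). assert (HEt := HE j0 t Ht).
      assert (h1 := Hp j0 t ltac:(lra)). assert (h2 := Hp j0 (Sf t) ltac:(lra)).
      assert (e1 := Ep j0 t ltac:(lra)). assert (e2 := Ep j0 (Sf t) ltac:(lra)).
      assert (hx := Hx j0 t (Sf t) ltac:(lra) ltac:(lra) ltac:(lra)).
      assert (dSp : 0 <= dS t).
      { destruct (Rle_dec 0 (dS t)) as [?|Hn]; auto. exfalso.
        assert (E j0 (Sf t) * dS t < 0). { apply Rmult_pos_neg; lra. }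
        assert (0 < alpha * E j0 t) by (apply Rmult_lt_0_compat; auto). lra. }
      split. apply Rmult_le_pos; lra.
      apply Rmult_le_reg_r with (E j0 t); auto.
      replace (alpha * H j0 t * E j0 t) with (H j0 t * (E j0 (Sf t) * dS t)) by (rewrite HEt; ring).
      replace (dS t * H j0 (Sf t) * E j0 t) with (H j0 (Sf t) * E j0 t * dS t) by ring.
      rewrite <- Rmult_assoc. apply Rmult_le_compat_r; auto.
  - rewrite (Pr_subst E Sf dS) by auto.
    rewrite (Pr_loc (fun j w => dS w * E j (Sf w)) (fun j w => alpha * E j w) a b);
      [| intros; rewrite Rmult_comm, HE; auto | lra | lra].
    apply Pr_scale; auto.
Qed.

Fixpoint prodl (H : nat -> R -> R) (j : nat) (ts : list R) : R :=
  match ts with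
  | nil => 1
  | t :: ts' => H j t * prodl H (S j) ts'
  end.

Lemma bridge H : GC H -> forall (k j : nat) (F : list R -> R) (c s r : R), s <= r ->
  (forall ts, length ts = k -> List.Forall (fun t => s <= t <= r) ts -> F ts = c * prodl H j ts) ->
  simplex_int k F s r = c * Pr H j k s r.
Proof.
  intros HC k. induction k as [|k IH]; intros j F c s r Hsr HF; simpl.
  - rewrite (HF nil); simpl; auto. 
  - rewrite (RInt_ext _ (fun t => scal c (H j t * Pr H (S j) k t r))).
    + rewrite (RInt_scal (V:=R_CompleteNormedModule)); [reflexivity | apply Pr_integrand_ex; auto].
    + intros t Ht. rewrite Rmin_left in Ht by lra. rewrite Rmax_right in Ht by lra.
      rewrite (IH (S j) _ (c * H j t)); [| lra |].
      * unfold scal; simpl; unfold mult; simpl. ring.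
      * intros ts Hl Hf. rewrite HF; simpl; [ring | lia |].
        constructor; [lra|]. eapply List.Forall_impl; [|exact Hf]. simpl; intros; lra.
Qed.

Lemma sgn_fwd lam u v : u <= v -> 0 <= (exp (lam*v) - exp (lam*u)) * lam.
Proof.
  intros H. destruct (Rtotal_order lam 0) as [Hl|[Hl|Hl]].
  - assert (exp (lam*v) <= exp (lam*u)).
    { destruct (Req_dec u v). subst; lra. left; apply exp_increasing; nra. } nra.
  - subst; lra.
  - assert (exp (lam*u) <= exp (lam*v)).
    { destruct (Req_dec u v). subst; lra. left; apply exp_increasing; nra. } nra.
Qed.

Lemma sgn_strict lam u v : u < v -> lam <> 0 -> 0 < (exp (lam*v) - exp (lam*u)) * lam.
Proof.
  intros H Hn. destruct (Rtotal_order lam 0) as [Hl|[Hl|Hl]].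
  - assert (exp (lam*v) < exp (lam*u)) by (apply exp_increasing; nra). nra.
  - lra.
  - assert (exp (lam*u) < exp (lam*v)) by (apply exp_increasing; nra). nra.
Qed.

Lemma sgn_bwd lam u v : lam <> 0 -> 0 <= (exp (lam*v) - exp (lam*u)) * lam -> u <= v.
Proof.
  intros Hn H. destruct (Rle_dec u v); auto. exfalso.
  assert (Hs := sgn_strict lam v u ltac:(lra) Hn). lra.
Qed.

Lemma mkS lam beta gam a b : lam <> 0 ->
  (forall x, a <= x <= b -> 0 < beta*exp(lam*x)+gam) ->
  (forall x, a <= x <= b ->
     is_derive (fun x => ln (beta*exp(lam*x)+gam)/lam) x (beta*exp(lam*x)/(beta*exp(lam*x)+gam))
     /\ continuous (fun x => beta*exp(lam*x)/(beta*exp(lam*x)+gam)) x) /\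
  (forall x, a <= x <= b -> exp (lam * (ln (beta*exp(lam*x)+gam)/lam)) = beta*exp(lam*x)+gam).
Proof.
  intros Hl Hq. split.
  - intros x Hx. specialize (Hq x Hx). split.
    + auto_derive. lra. field. split; lra.
    + apply (ex_derive_continuous (fun x => beta*exp(lam*x)/(beta*exp(lam*x)+gam))).
      auto_derive. lra.
  - intros x Hx. replace (lam * (ln (beta * exp (lam * x) + gam) / lam)) with (ln (beta * exp (lam * x) + gam)) by (field; auto).
    apply exp_ln. auto.
Qed.

Definition Sprop (lam a b : R) (Sf dS : R -> R) (alpha : R) :=
  0 < alpha /\
  (forall x, a <= x <= b -> is_derive Sf x (dS x) /\ continuous dS x) /\
  (forall x, a <= x <= b -> x <= Sf x <= 1) /\
  (forall x, a <= x <= b -> exp (lam * Sf x) * dS x = alpha * exp (lam * x)).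

Lemma S_part1 lam r1 r2 : 0 < r1 -> r1 <= r2 -> r2 <= 1 ->
  exists Sf dS alpha, Sprop lam 0 r1 Sf dS alpha /\ Sf 0 = 0 /\ Sf r1 = r2.
Proof.
  intros H1 H2 H3. destruct (Req_dec lam 0) as [Hl|Hl].
  - subst lam. exists (fun x => r2 / r1 * x), (fun _ => r2 / r1), (r2/r1).
    assert (1 <= r2 / r1) by (apply Rcomplements.Rle_div_r; lra).
    split; [split; [|split; [|split]]|split].
    + lra.
    + intros x Hx. split. auto_derive. auto. ring. apply continuous_const.
    + intros x Hx. split. nra. apply Rle_trans with (r2/r1*r1). nra. field_simplify; lra.
    + intros x Hx. rewrite !Rmult_0_l, exp_0. ring.
    + ring.
    + field. lra.
  - set (e1 := exp (lam*r1)). set (e2 := exp (lam*r2)). set (eL := exp (lam*1)).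
    set (alpha := (e2 - 1)/(e1 - 1)).
    assert (HP : 0 < (e1 - 1) * lam).
    { assert (h := sgn_strict lam 0 r1 H1 Hl). rewrite Rmult_0_r, exp_0 in h. exact h. }
    assert (He1 : e1 - 1 <> 0) by (intro E; rewrite E in HP; lra).
    assert (HC : 0 <= (e2 - e1) * lam) by (apply sgn_fwd; lra).
    assert (HD : 0 <= (eL - e2) * lam) by (apply sgn_fwd; lra).
    assert (HL1 : 0 <= (eL - 1) * lam).
    { assert (h := sgn_fwd lam 0 1 ltac:(lra)). rewrite Rmult_0_r, exp_0 in h. exact h. }
    assert (e2p : 0 < e2) by apply exp_pos.
    assert (Hq : forall x, 0 <= x <= r1 -> 0 < alpha * exp (lam*x) + (1 - alpha)
       /\ 0 <= (alpha * exp (lam*x) + (1 - alpha) - exp (lam * x)) * lam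
       /\ 0 <= (eL - (alpha * exp (lam*x) + (1 - alpha))) * lam).
    { intros x Hx. set (ex := exp (lam*x)).
      assert (HA : 0 <= (ex - 1) * lam).
      { assert (h := sgn_fwd lam 0 x ltac:(lra)). rewrite Rmult_0_r, exp_0 in h. exact h. }
      assert (HB : 0 <= (e1 - ex) * lam) by (apply sgn_fwd; lra).
      set (q := alpha * ex + (1 - alpha)).
      assert (E1 : q * ((e1 - 1) * lam) = (e1 - ex) * lam + (ex - 1) * lam * e2)
        by (unfold q, alpha; field; auto).
      assert (E2 : (q - ex) * lam * ((e1 - 1) * lam) = (e2 - e1) * lam * ((ex - 1) * lam))
        by (unfold q, alpha; field; auto).
      assert (E3 : (eL - q) * lam * ((e1 - 1) * lam) = (ex - 1) * lam * ((eL - e2) * lam) + (e1 - ex) * lam * ((eL - 1) * lam))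
        by (unfold q, alpha; field; auto).
      split; [|split].
      - apply Rmult_lt_reg_r with ((e1 - 1) * lam); auto. rewrite E1, Rmult_0_l.
        assert ((ex - 1) * lam + (e1 - ex) * lam = (e1 - 1) * lam) by ring. nra.
      - apply Rmult_le_reg_r with ((e1 - 1) * lam); auto. rewrite E2, Rmult_0_l. nra.
      - apply Rmult_le_reg_r with ((e1 - 1) * lam); auto. rewrite E3, Rmult_0_l. nra. }
    destruct (mkS lam alpha (1 - alpha) 0 r1 Hl) as [HD1 HD2]. intros; apply Hq; auto.
    eexists _, _, alpha. split; [split; [|split; [|split]]|split].
    + apply Rmult_lt_reg_r with ((e1 - 1) * lam); auto. rewrite Rmult_0_l.
      replace (alpha * ((e1 - 1) * lam)) with ((e2 - 1) * lam) by (unfold alpha; field; auto).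
      assert (h := sgn_strict lam 0 r2 ltac:(lra) Hl). rewrite Rmult_0_r, exp_0 in h. exact h.
    + exact HD1.
    + intros x Hx. destruct (Hq x Hx) as [Q1 [Q2 Q3]]. split.
      * apply (sgn_bwd lam); auto. cbv beta. rewrite HD2; auto.
      * apply (sgn_bwd lam); auto. cbv beta. rewrite HD2; auto.
    + intros x Hx. cbv beta. rewrite HD2 by auto. destruct (Hq x Hx) as [Q1 _]. field. lra.
    + simpl. rewrite Rmult_0_r, exp_0. replace (alpha * 1 + (1 - alpha)) with 1 by ring.
      rewrite ln_1. field; auto.
    + simpl. replace (alpha * exp (lam * r1) + (1 - alpha)) with e2 by (unfold alpha; fold e1; field; auto).
      unfold e2. rewrite ln_exp. field; auto.
Qed.

Lemma S_part2 lam s1 s2 : 0 <= s1 -> s1 <= s2 -> s2 < 1 ->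
  exists Sf dS alpha, Sprop lam s1 1 Sf dS alpha /\ Sf s1 = s2 /\ Sf 1 = 1.
Proof.
  intros H1 H2 H3. destruct (Req_dec lam 0) as [Hl|Hl].
  - subst lam. set (beta := (1 - s2)/(1 - s1)).
    assert (Hb : 0 < beta <= 1).
    { unfold beta. split. apply Rdiv_lt_0_compat; lra. apply Rcomplements.Rle_div_l; lra. }
    exists (fun x => 1 - beta * (1 - x)), (fun _ => beta), beta.
    split; [split; [|split; [|split]]|split].
    + lra.
    + intros x Hx. split. auto_derive. auto. ring. apply continuous_const.
    + intros x Hx. split; nra.
    + intros x Hx. rewrite !Rmult_0_l, exp_0. ring.
    + unfold beta; field; lra.
    + ring.
  - set (e1 := exp (lam*s1)). set (e2 := exp (lam*s2)). set (eL := exp (lam*1)).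
    set (beta := (eL - e2)/(eL - e1)).
    assert (HP : 0 < (eL - e1) * lam) by (apply sgn_strict; auto; lra).
    assert (He1 : eL - e1 <> 0) by (intro E; rewrite E in HP; lra).
    assert (HC : 0 <= (e2 - e1) * lam) by (apply sgn_fwd; lra).
    assert (HD : 0 < (eL - e2) * lam) by (apply sgn_strict; auto; lra).
    assert (eLp : 0 < eL) by apply exp_pos.
    assert (Hq : forall x, s1 <= x <= 1 -> 0 < beta * exp (lam*x) + (1 - beta) * eL
       /\ 0 <= (beta * exp (lam*x) + (1 - beta) * eL - exp (lam * x)) * lam
       /\ 0 <= (eL - (beta * exp (lam*x) + (1 - beta) * eL)) * lam).
    { intros x Hx. set (ex := exp (lam*x)).
      assert (exp_ : 0 < ex) by apply exp_pos.
      assert (HB : 0 <= (eL - ex) * lam) by (apply sgn_fwd; lra).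
      set (q := beta * ex + (1 - beta) * eL).
      assert (E1 : q * ((eL - e1) * lam) = (eL - e2) * lam * ex + (e2 - e1) * lam * eL)
        by (unfold q, beta; field; auto).
      assert (E2 : (q - ex) * lam * ((eL - e1) * lam) = (e2 - e1) * lam * ((eL - ex) * lam))
        by (unfold q, beta; field; auto).
      assert (E3 : (eL - q) * lam * ((eL - e1) * lam) = (eL - e2) * lam * ((eL - ex) * lam))
        by (unfold q, beta; field; auto).
      split; [|split].
      - apply Rmult_lt_reg_r with ((eL - e1) * lam); auto. rewrite E1, Rmult_0_l. nra.
      - apply Rmult_le_reg_r with ((eL - e1) * lam); auto. rewrite E2, Rmult_0_l. nra.
      - apply Rmult_le_reg_r with ((eL - e1) * lam); auto. rewrite E3, Rmult_0_l. nra. }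
    destruct (mkS lam beta ((1 - beta) * eL) s1 1 Hl) as [HD1 HD2]. intros; apply Hq; auto.
    eexists _, _, beta. split; [split; [|split; [|split]]|split].
    + apply Rmult_lt_reg_r with ((eL - e1) * lam); auto. rewrite Rmult_0_l.
      replace (beta * ((eL - e1) * lam)) with ((eL - e2) * lam) by (unfold beta; field; auto). auto.
    + exact HD1.
    + intros x Hx. destruct (Hq x Hx) as [Q1 [Q2 Q3]]. split.
      * apply (sgn_bwd lam); auto. cbv beta. rewrite HD2; auto.
      * apply (sgn_bwd lam); auto. cbv beta. rewrite HD2; auto.
    + intros x Hx. cbv beta. rewrite HD2 by auto. destruct (Hq x Hx) as [Q1 _]. field. lra.
    + simpl. replace (beta * exp (lam * s1) + (1 - beta) * eL) with e2 by (unfold beta; fold e1; field; auto).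
      unfold e2. rewrite ln_exp. field; auto.
    + simpl. fold eL. replace (beta * eL + (1 - beta) * eL) with eL by ring.
      unfold eL. rewrite ln_exp. field; auto.
Qed.

Lemma cR_plus (f g : R -> R) (x : R) : continuous f x -> continuous g x -> continuous (fun y => f y + g y) x.
Proof. intros; exact (continuous_plus f g x H H0). Qed.
Lemma cR_minus (f g : R -> R) (x : R) : continuous f x -> continuous g x -> continuous (fun y => f y - g y) x.
Proof. intros; exact (continuous_minus f g x H H0). Qed.

Lemma exp_le_mono a b : a <= b -> exp a <= exp b.
Proof. intros H. destruct (Req_dec a b). subst; lra. left; apply exp_increasing; lra. Qed.

Definition Kf (l : R -> nat -> R) (z : nat) (w : R) :=
  Derive (fun v => l v z) w * / l w z + l w (S z) - l w z.


Lemma Xi_eq (l : R -> nat -> R)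
  (l_pos : forall z t, 0 <= t <= 1 -> 0 < l t z)
  (l_C1 : forall z t, 0 <= t <= 1 ->
      ex_derive (fun u => l u z) t /\
      continuous (fun u => Derive (fun v => l v z) u) t) z w :
  0 <= w <= 1 -> Xi l w z = Kf l z w.
Proof.
  intros Hw. unfold Xi, Kf. f_equal. f_equal.
  apply is_derive_unique.
  assert (h := is_derive_comp ln (fun u => l u z) w (/ l w z) (Derive (fun v => l v z) w)
     (is_derive_ln _ (l_pos z w Hw)) (Derive_correct _ _ (proj1 (l_C1 z w Hw)))).
  unfold scal in h; simpl in h; unfold mult in h; simpl in h. exact h.
Qed.

Lemma K_cont (l : R -> nat -> R)
  (l_pos : forall z t, 0 <= t <= 1 -> 0 < l t z)
  (l_C1 : forall z t, 0 <= t <= 1 ->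
      ex_derive (fun u => l u z) t /\
      continuous (fun u => Derive (fun v => l v z) u) t) z w :
  0 <= w <= 1 -> continuous (Kf l z) w.
Proof.
  intros Hw. unfold Kf.
  assert (Hl : forall z, continuous (fun u => l u z) w).
  { intros z'. apply (ex_derive_continuous (fun u => l u z')). apply l_C1; auto. }
  apply cR_minus; [apply cR_plus|]; auto.
  apply cR_mult. apply l_C1; auto.
  apply (continuous_Rinv_comp (fun u => l u z)); auto.
  assert (h := l_pos z w Hw). lra.
Qed.

Definition gf l z u := Kf l z (clamp 0 1 u).

Definition Ht (l : R -> nat -> R) (x : nat) (lam : R) (j0 k : nat) (j : nat) (t : R) : R :=
  if andb (Nat.leb j0 j) (Nat.ltb j (j0 + k)) then exp (xi l x j (clamp 0 1 t)) else exp (lam * t).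

Definition Et (lam : R) (j : nat) (t : R) := exp (lam * t).

Lemma Et_GC lam : GC (Et lam).
Proof.
  intros j t. unfold Et. apply (continuous_comp (fun t => lam * t) exp).
  apply (cR_mult (fun _ => lam) (fun t => t)). apply continuous_const. apply continuous_id.
  apply continuous_exp.
Qed.

Lemma ratio_ok A1 A2 B1 B2 al : 0 < al -> 0 < B1 -> al * A1 <= A2 -> B2 = al * B1 -> A1 / B1 <= A2 / B2.
Proof.
  intros Ha Hb H1 H2. subst B2. replace (A1 / B1) with ((al * A1) / (al * B1)) by (field; lra).
  unfold Rdiv. apply Rmult_le_compat_r; auto. left. apply Rinv_0_lt_compat. nra.
Qed.

Lemma prod_E lam : forall ts j, exp (lam * fold_right Rplus 0 ts) = 1 * prodl (Et lam) j ts.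
Proof.
  induction ts as [|t ts IH]; intros j; simpl.
  - rewrite Rmult_0_r, exp_0. ring.
  - rewrite Rmult_plus_distr_l, exp_plus, (IH (S j)). unfold Et. ring.
Qed.

Lemma lemma3p4_gen (l : R -> nat -> R)
  (l_pos : forall z t, 0 <= t <= 1 -> 0 < l t z)
  (l_C1 : forall z t, 0 <= t <= 1 ->
      ex_derive (fun u => l u z) t /\
      continuous (fun u => Derive (fun v => l v z) u) t)
  (x : nat) (lam : R) (j0 k : nat)
  (hinf : forall t j, 0 <= t <= 1 -> (j0 <= j)%nat -> (j < j0 + k)%nat -> lam <= Xi l t (x + j - 1)) :
  GC (Ht l x lam j0 k) /\
  (forall j t, 0 <= t <= 1 -> 0 < Ht l x lam j0 k j t) /\
  (forall j t u, 0 <= t -> t <= u -> u <= 1 ->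
     Ht l x lam j0 k j t * Et lam j u <= Ht l x lam j0 k j u * Et lam j t) /\
  (forall ts j, (j0 <= j)%nat -> (j + length ts <= j0 + k)%nat ->
     List.Forall (fun t => 0 <= t <= 1) ts ->
     exp (xi_sum l x j ts) = 1 * prodl (Ht l x lam j0 k) j ts).
Proof.
  assert (Hg : forall z u, continuous (gf l z) u).
  { intros z u. apply (cont_clamp_comp (Kf l z) 0 1); [lra|]. intros; apply K_cont; auto. }
  assert (Hxi : forall j t, 0 <= t <= 1 -> xi l x j t = RInt (gf l (x + j - 1)) 0 t).
  { intros j t Ht0. unfold xi. apply RInt_ext. intros u Hu.
    rewrite Rmin_left in Hu by lra. rewrite Rmax_right in Hu by lra.
    unfold gf. rewrite clamp_id by lra. apply Xi_eq; auto. lra. }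
  assert (Hin : forall j, (j0 <= j)%nat -> (j < j0 + k)%nat -> forall t, Ht l x lam j0 k j t = exp (xi l x j (clamp 0 1 t))).
  { intros j H1 H2 t. unfold Ht.
    replace (Nat.leb j0 j) with true by (symmetry; apply Nat.leb_le; auto).
    replace (Nat.ltb j (j0 + k)) with true by (symmetry; apply Nat.ltb_lt; auto). reflexivity. }
  assert (Hout : forall j, ~ ((j0 <= j)%nat /\ (j < j0 + k)%nat) -> forall t, Ht l x lam j0 k j t = exp (lam * t)).
  { intros j Hn t. unfold Ht. destruct (Nat.leb j0 j) eqn:E1; destruct (Nat.ltb j (j0 + k)) eqn:E2; simpl; auto.
    apply Nat.leb_le in E1. apply Nat.ltb_lt in E2. tauto. }
  assert (Hrange : forall j, ((j0 <= j)%nat /\ (j < j0 + k)%nat) \/ ~ ((j0 <= j)%nat /\ (j < j0 + k)%nat)) by (intros; lia).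
  split; [|split; [|split]].
  - intros j t. destruct (Hrange j) as [[H1 H2]|Hn].
    + apply (continuous_ext (fun t => exp (RInt (gf l (x + j - 1)) 0 (clamp 0 1 t)))).
      { intros u. rewrite Hin by auto. rewrite Hxi; auto. apply clamp_in; lra. }
      apply (continuous_comp (clamp 0 1) (fun c => exp (RInt (gf l (x + j - 1)) 0 c))).
      apply clamp_cont.
      apply (continuous_comp (fun c => RInt (gf l (x + j - 1)) 0 c) exp).
      apply cR_cont_RInt_up; auto. apply continuous_exp.
    + apply (continuous_ext (fun t => exp (lam * t))). intros; rewrite Hout; auto.
      apply (Et_GC lam 0%nat).
  - intros j t _. unfold Ht. destruct andb; apply exp_pos.
  - intros j t u H1 H2 H3. unfold Et. destruct (Hrange j) as [[Hj1 Hj2]|Hn].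
    + rewrite !Hin by auto. rewrite !clamp_id by lra. rewrite !Hxi by lra.
      rewrite <- (RInt_Chasles (V:=R_CompleteNormedModule) (gf l (x + j - 1)) 0 t u) by
        (apply (ex_RInt_continuous (V:=R_CompleteNormedModule)); intros; apply Hg).
      assert (HI : lam * (u - t) <= RInt (gf l (x + j - 1)) t u).
      { replace (lam * (u - t)) with (RInt (fun _ => lam) t u).
        2:{ rewrite RInt_const. unfold scal; simpl; unfold mult; simpl. ring. }
        apply RInt_le; auto.
        apply (ex_RInt_continuous (V:=R_CompleteNormedModule)); intros; apply continuous_const.
        apply (ex_RInt_continuous (V:=R_CompleteNormedModule)); intros; apply Hg.
        intros v Hv. unfold gf. rewrite clamp_id by lra. rewrite <- Xi_eq; auto; try lra.
        apply hinf; auto; lra. }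
      rewrite <- !exp_plus. apply exp_le_mono. unfold plus; simpl. lra.
    + rewrite !Hout by auto. rewrite <- !exp_plus. apply exp_le_mono. lra.
  - induction ts as [|t ts IH]; intros j Hj Hl Hf; simpl; [rewrite exp_0; ring|].
    inversion Hf; subst. simpl in Hl.
    rewrite exp_plus. rewrite (IH (S j)); try lia; auto.
    rewrite Hin by lia. rewrite clamp_id by auto. ring.
Qed.

Lemma Forall_sub (s r : R) ts : 0 <= s -> r <= 1 -> List.Forall (fun t => s <= t <= r) ts -> List.Forall (fun t => 0 <= t <= 1) ts.
Proof. intros. eapply List.Forall_impl; [|exact H1]. simpl; intros; lra. Qed.

Theorem lemma3p4
  (l : R -> nat -> R)
  (l_pos : forall z t, 0 <= t <= 1 -> 0 < l t z)
  (l_C1 : forall z t, 0 <= t <= 1 ->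
      ex_derive (fun u => l u z) t /\
      continuous (fun u => Derive (fun v => l v z) u) t)
  (x y : nat) (hxy : (x <= y)%nat) (lam : R)
  (hinf : forall t z, 0 <= t <= 1 -> (x <= z)%nat -> (z <= y - 1)%nat ->
      lam <= Xi l t z)
  (i : nat) (hi1 : (1 <= i)%nat) (hin : (i <= y - x)%nat) :
  ((2 <= i)%nat ->
     forall s1 s2, 0 < s1 -> s1 <= s2 -> s2 < 1 ->
       simplex_int (i - 1) (fun ts => exp (xi_sum l x 1 ts)) 0 s1
         / simplex_int (i - 1) (fun ts => exp (lam * fold_right Rplus 0 ts)) 0 s1
       <=
       simplex_int (i - 1) (fun ts => exp (xi_sum l x 1 ts)) 0 s2
         / simplex_int (i - 1) (fun ts => exp (lam * fold_right Rplus 0 ts)) 0 s2)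
  /\
  ((i + 1 <= y - x)%nat ->
     forall s1 s2, 0 < s1 -> s1 <= s2 -> s2 < 1 ->
       simplex_int (y - x - i) (fun ts => exp (xi_sum l x (i + 1) ts)) s1 1
         / simplex_int (y - x - i) (fun ts => exp (lam * fold_right Rplus 0 ts)) s1 1
       <=
       simplex_int (y - x - i) (fun ts => exp (xi_sum l x (i + 1) ts)) s2 1
         / simplex_int (y - x - i) (fun ts => exp (lam * fold_right Rplus 0 ts)) s2 1).
Proof.
  assert (EC := Et_GC lam).
  assert (Ep : forall j t, 0 <= t <= 1 -> 0 < Et lam j t) by (intros; apply exp_pos).
  split.
  - intros Hi s1 s2 H1 H2 H3.
    destruct (lemma3p4_gen l l_pos l_C1 x lam 1 (i - 1)) as [HC [Hp [Hx Hpr]]].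
    { intros t j Ht Hj1 Hj2. apply hinf; auto; lia. }
    destruct (S_part1 lam s1 s2 H1 H2 ltac:(lra)) as [Sf [dS [al [[Hal [HS [HSr HE]]] [S0 S1]]]]].
    destruct (core _ _ 0 s1 al Sf dS HC EC Hp Ep Hx ltac:(lra) ltac:(lra) ltac:(lra) Hal HS HSr (fun _ => HE) (i - 1) 1)
      as [K1 K2].
    rewrite S0, S1 in K1, K2.
    assert (Hbr : forall s, 0 <= s <= 1 -> simplex_int (i - 1) (fun ts => exp (xi_sum l x 1 ts)) 0 s
        = 1 * Pr (Ht l x lam 1 (i - 1)) 1 (i - 1) 0 s).
    { intros s Hs. apply bridge; auto; try lra. intros ts Hl Hf. apply Hpr; try lia.
      apply (Forall_sub 0 s); auto; lra. }
    assert (Hbe : forall s, 0 <= s <= 1 -> simplex_int (i - 1) (fun ts => exp (lam * fold_right Rplus 0 ts)) 0 s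
        = 1 * Pr (Et lam) 1 (i - 1) 0 s).
    { intros s Hs. apply bridge; auto; try lra. intros; apply prod_E. }
    rewrite !Hbr, !Hbe by lra. rewrite !Rmult_1_l.
    apply (ratio_ok _ _ _ _ (al ^ (i - 1))); auto.
    apply pow_lt; auto.
    apply (Pr_pos _ 0 1); auto; lra.
  - intros Hi s1 s2 H1 H2 H3.
    destruct (lemma3p4_gen l l_pos l_C1 x lam (i + 1) (y - x - i)) as [HC [Hp [Hx Hpr]]].
    { intros t j Ht Hj1 Hj2. apply hinf; auto; lia. }
    destruct (S_part2 lam s1 s2 ltac:(lra) H2 H3) as [Sf [dS [al [[Hal [HS [HSr HE]]] [S0 S1]]]]].
    destruct (core _ _ s1 1 al Sf dS HC EC Hp Ep Hx ltac:(lra) ltac:(lra) ltac:(lra) Hal HS HSr (fun _ => HE) (y - x - i) (i + 1))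
      as [K1 K2].
    rewrite S0, S1 in K1, K2.
    assert (Hbr : forall s, 0 <= s <= 1 -> simplex_int (y - x - i) (fun ts => exp (xi_sum l x (i + 1) ts)) s 1
        = 1 * Pr (Ht l x lam (i + 1) (y - x - i)) (i + 1) (y - x - i) s 1).
    { intros s Hs. apply bridge; auto; try lra. intros ts Hl Hf. apply Hpr; try lia.
      apply (Forall_sub s 1); auto; lra. }
    assert (Hbe : forall s, 0 <= s <= 1 -> simplex_int (y - x - i) (fun ts => exp (lam * fold_right Rplus 0 ts)) s 1
        = 1 * Pr (Et lam) (i + 1) (y - x - i) s 1).
    { intros s Hs. apply bridge; auto; try lra. intros; apply prod_E. }
    rewrite !Hbr, !Hbe by lra. rewrite !Rmult_1_l.
    apply (ratio_ok _ _ _ _ (al ^ (y - x - i))); auto.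
    apply pow_lt; auto.
    apply (Pr_pos _ 0 1); auto; lra.
Qed.
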